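(* Let $f_V^0(u)=(32u^2-1)\cos2u+\cos6u-8u\sin2u$ and let $F[f_V^0]=\inf\{u>0:f_V^0(u)=0\}$ be its first positive root. Then $F[f_V^0]\in(\frac58\pi,\frac34\pi)$, $f_V^0$ has a simple root at $F[f_V^0]$, and $f_V^0(u)<0$ for all $u\in(0,F[f_V^0])$. *)

(* Defs.v *)
From Stdlib Require Import Reals.
Open Scope R_scope.

Definition fV0 (u : R) : R :=
  (32 * u ^ 2 - 1) * cos (2 * u) + cos (6 * u) - 8 * u * sin (2 * u).

Definition posRoots (u : R) : Prop := 0 < u /\ fV0 u = 0.

Definition is_glb (E : R -> Prop) (m : R) : Prop :=
  (forall x, E x -> m <= x) /\ (forall b, (forall x, E x -> b <= x) -> b <= m).

(* Main.v *)
Require Import Defs.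
From Stdlib Require Import Reals.
Open Scope R_scope.
From Stdlib Require Import Lra Psatz FunctionalExtensionality.
From Coquelicot Require Import Coquelicot.

Definition gg (x : R) : R := (2 * x ^ 2 - 1) * cos x + cos x ^ 3 - x * sin x.
Definition gd (x : R) : R := 3 * x * cos x - 2 * x ^ 2 * sin x - 3 * cos x ^ 2 * sin x.

Lemma PI_gt3 : 3 < PI. Proof. pose proof PI2_3_2; lra. Qed.

Lemma sc1 x : sin x ^ 2 + cos x ^ 2 = 1.
Proof. pose proof (sin2_cos2 x). unfold Rsqr in H. lra. Qed.

Lemma f_g u : fV0 u = 4 * gg (2 * u).
Proof.
  unfold fV0, gg.
  replace (6 * u) with (2 * u + 2 * u + 2 * u) by ring.
  rewrite !cos_plus, !sin_plus.
  pose proof (sc1 (2*u)).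
  set (c := cos (2*u)) in *. set (s := sin (2*u)) in *.
  apply Rminus_diag_uniq.
  match goal with |- ?a - ?b = 0 => replace (a - b) with (3*c*(1 - (s^2 + c^2))) by ring end.
  rewrite H. ring.
Qed.

Lemma g_deriv x : derivable_pt_lim gg x (gd x).
Proof.
  apply is_derive_Reals. unfold gg, gd. auto_derive; auto. ring.
Qed.

Lemma g_cont : continuity gg.
Proof. intro x. apply derivable_continuous_pt. exists (gd x). apply g_deriv. Qed.

Lemma g_alt x : gg x = cos x * (2 * x^2 - sin x ^ 2) - sin x * x.
Proof. unfold gg. pose proof (sc1 x). replace (cos x ^ 3) with (cos x * (1 - sin x ^2)).
  ring. replace (1 - sin x ^ 2) with (cos x ^ 2) by lra. ring. Qed.

Lemma g_neg1 x : 0 < x <= PI / 2 -> gg x < 0.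
Proof.
  intros [H1 H2]. pose proof PI_gt3. pose proof PI_4.
  rewrite g_alt.
  assert (Sl : x - x^3/6 <= sin x).
  { pose proof (sin_bound x 0 ltac:(lra) ltac:(lra)) as [S1 _].
    unfold sin_approx, sin_term in S1. simpl in S1. lra. }
  assert (Su : sin x <= x - x^3/6 + x^5/120).
  { pose proof (sin_bound x 0 ltac:(lra) ltac:(lra)) as [_ S1].
    unfold sin_approx, sin_term in S1. simpl in S1. lra. }
  assert (Cu : cos x <= 1 - x^2/2 + x^4/24).
  { pose proof (cos_bound x 0 ltac:(lra) ltac:(lra)) as [_ S1].
    unfold cos_approx, cos_term in S1. simpl in S1. lra. }
  pose proof (cos_ge_0 x ltac:(lra) ltac:(lra)) as C0.
  set (s := sin x) in *. set (c := cos x) in *.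
  assert (HSL : x - x^3/6 <= s) by lra.
  assert (x^2 <= 4) by nra.
  assert (HSU : s <= x) by nra.
  assert (HSL0 : 0 < x - x^3/6) by nra.
  assert (HCU : c <= 1 - x^2/2 + x^4/24) by lra.
  assert (HCU0 : 0 <= 1 - x^2/2 + x^4/24) by lra.
  set (SL := x - x^3/6) in *. set (CU := 1 - x^2/2 + x^4/24) in *.
  assert (Hs0 : 0 <= s) by lra.
  assert (Hs2 : s^2 <= x^2) by (apply pow_incr; lra).
  assert (A : c * (2 * x^2 - s^2) <= CU * (2 * x^2 - s^2)).
  { pose proof (pow2_ge_0 x). apply Rmult_le_compat_r; lra. }
  assert (Hs3 : SL^2 <= s^2) by (apply pow_incr; lra).
  assert (B : CU * (2*x^2 - s^2) - s * x <= CU * (2*x^2 - SL^2) - SL * x).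
  { assert (CU * (s^2 - SL^2) >= 0) by (apply Rle_ge, Rmult_le_pos; lra).
    assert (x * (s - SL) >= 0) by (apply Rle_ge, Rmult_le_pos; lra). nra. }
  assert (E : CU * (2*x^2 - SL^2) - SL * x = x^6 * (-11/72 + x^2/36 - x^4/864))
    by (unfold CU, SL; field).
  assert (0 < x^6) by (apply pow_lt; lra).
  assert (-11/72 + x^2/36 - x^4/864 < 0) by nra.
  nra.
Qed.

Lemma g_neg2 x : PI / 2 < x <= PI -> gg x < 0.
Proof.
  intros [H1 H2]. pose proof PI_gt3. rewrite g_alt.
  pose proof (cos_lt_0 x ltac:(lra) ltac:(lra)).
  pose proof (sin_ge_0 x ltac:(lra) ltac:(lra)).
  pose proof (sc1 x). pose proof (pow2_ge_0 (cos x)).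
  assert (x^2 > 2) by nra.
  assert (cos x * (2 * x^2 - sin x ^2) < 0) by (apply Rmult_neg_pos; lra).
  assert (0 <= sin x * x) by (apply Rmult_le_pos; lra). lra.
Qed.

Lemma g_neg3 x : PI <= x <= 5 * PI / 4 -> gg x < 0.
Proof.
  intros [H1 H2]. pose proof PI_gt3. rewrite g_alt.
  assert (Ec : cos x = - cos (x - PI)) by (rewrite <- neg_cos; f_equal; ring).
  assert (Es : sin x = - sin (x - PI)) by (rewrite <- neg_sin; f_equal; ring).
  rewrite Ec, Es.
  assert (Hy1 : 0 <= x - PI) by lra. assert (Hy2 : x - PI <= PI / 4) by lra.
  set (y := x - PI) in *.
  assert (Hsy : 0 <= sin y) by (apply sin_ge_0; lra).
  assert (Hcy : 0 < cos y) by (apply cos_gt_0; lra).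
  assert (Hsc : sin y <= cos y).
  { rewrite <- sin_shift. apply sin_incr_1; lra. }
  pose proof (SIN_bound y).
  assert (Hs2 : sin y ^ 2 <= 1) by nra.
  assert (x^2 >= 9) by nra.
  assert (Hq : 2 * x^2 - sin y ^ 2 >= x + 1) by nra.
  assert (cos y * (2 * x^2 - sin y ^ 2) >= cos y * (x + 1)).
  { apply Rle_ge, Rmult_le_compat_l; lra. }
  assert (sin y * x <= cos y * x) by (apply Rmult_le_compat_r; lra).
  nra.
Qed.

Lemma g_neg x : 0 < x <= 5 * PI / 4 -> gg x < 0.
Proof.
  intros H. destruct (Rle_lt_dec x (PI/2)). apply g_neg1; lra.
  destruct (Rle_lt_dec x PI). apply g_neg2; lra. apply g_neg3; lra.
Qed.

Lemma gd_pos x : 5 * PI / 4 <= x <= 3 * (PI / 2) -> 0 < gd x.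
Proof.
  intros [H1 H2]. pose proof PI_gt3. unfold gd.
  assert (Ec : cos x = - cos (x - PI)) by (rewrite <- neg_cos; f_equal; ring).
  assert (Es : sin x = - sin (x - PI)) by (rewrite <- neg_sin; f_equal; ring).
  rewrite Ec, Es.
  assert (Hy1 : PI / 4 <= x - PI) by lra. assert (Hy2 : x - PI <= PI / 2) by lra.
  set (y := x - PI) in *.
  assert (Hsy : 0 < sin y) by (apply sin_gt_0; lra).
  assert (Hcy : 0 <= cos y) by (apply cos_ge_0; lra).
  assert (Hsc : cos y <= sin y).
  { rewrite <- sin_shift. apply sin_incr_1; lra. }
  assert (0 < x) by lra.
  assert (0 < x * sin y * (2*x - 3)).
  { apply Rmult_lt_0_compat; [apply Rmult_lt_0_compat|]; lra. }
  assert (0 <= 3 * cos y ^ 2 * sin y).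
  { pose proof (pow2_ge_0 (cos y)). apply Rmult_le_pos; lra. }
  assert (x * cos y <= x * sin y) by (apply Rmult_le_compat_l; lra).
  nra.
Qed.

Lemma g_b : 0 < gg (3 * (PI / 2)).
Proof. unfold gg. rewrite cos_3PI2, sin_3PI2. pose proof PI_gt3. nra. Qed.

Lemma g_incr x y : 5 * PI / 4 <= x -> x < y -> y <= 3 * (PI / 2) -> gg x < gg y.
Proof.
  intros. destruct (MVT_cor2 gg gd x y H0) as [c [E Hc]].
  { intros; apply g_deriv. }
  pose proof (gd_pos c ltac:(lra)). nra.
Qed.

Theorem lemma5p2 :
  exists F : R,
    is_glb posRoots F /\
    5 / 8 * PI < F < 3 / 4 * PI /\
    fV0 F = 0 /\
    (exists d : R, derivable_pt_lim fV0 F d /\ d <> 0) /\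
    (forall u : R, 0 < u < F -> fV0 u < 0).
Proof.
  pose proof PI_gt3.
  assert (Hab : 5 * PI / 4 < 3 * (PI / 2)) by lra.
  assert (Ha : gg (5 * PI / 4) < 0) by (apply g_neg; lra).
  destruct (IVT gg (5 * PI / 4) (3 * (PI / 2)) g_cont Hab Ha g_b) as [x0 [Hx0 Gx0]].
  assert (Hlt : 5 * PI / 4 < x0 < 3 * (PI / 2)).
  { split; apply Rnot_le_lt; intro Hc.
    - assert (x0 = 5 * PI / 4) by lra. subst x0.
      pose proof (g_neg (5 * PI / 4) ltac:(lra)). lra.
    - assert (x0 = 3 * (PI / 2)) by lra. subst x0. pose proof g_b. lra. }
  assert (Hneg : forall x, 0 < x < x0 -> gg x < 0).
  { intros x Hx. destruct (Rle_lt_dec x (5 * PI / 4)). apply g_neg; lra.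
    rewrite <- Gx0. apply g_incr; lra. }
  exists (x0 / 2).
  assert (Hf0 : fV0 (x0 / 2) = 0).
  { rewrite f_g. replace (2 * (x0/2)) with x0 by field. rewrite Gx0. ring. }
  assert (Hn : forall u, 0 < u < x0 / 2 -> fV0 u < 0).
  { intros u Hu. rewrite f_g. pose proof (Hneg (2*u) ltac:(lra)). lra. }
  split; [|split; [lra|split; [exact Hf0|split; [|exact Hn]]]].
  - split.
    + intros x [Hx Hfx]. apply Rnot_lt_le. intro Hc.
      pose proof (Hn x ltac:(lra)). lra.
    + intros b Hb. apply Hb. split; [lra|exact Hf0].
  - exists (8 * gd x0). split.
    + replace fV0 with (fun u => 4 * gg (2 * u)).
      2:{ apply functional_extensionality; intro; symmetry; apply f_g. }
      apply is_derive_Reals.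
      replace (8 * gd x0) with (4 * (2 * gd (2 * (x0/2)))).
      2:{ replace (2 * (x0/2)) with x0 by field. ring. }
      apply is_derive_scal. 
      apply (is_derive_comp gg (fun u => 2 * u)).
      * apply is_derive_Reals. apply g_deriv.
      * auto_derive; auto; ring.
    + pose proof (gd_pos x0 ltac:(lra)). lra.
Qed.
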